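(* No deterministic mechanism that is truthful without money and with verification for CAs with known $2$-minded bidders has approximation ratio strictly less than $2$. This holds even restricted to instances with $n=2$ bidders and $m=2$ goods (and no computational restriction on the mechanism).
   Context: Combinatorial auction with a set $\mathsf U$ of $m$ goods (single copy each) and $n$ bidders; bidder $i$ has a public collection $\mathcal S_i$ of $k$ nonempty subsets of $\mathsf U$ (known bidders; here $k=2$) and a private valuation $v_i:\mathcal S_i\to\mathbb R_{\ge0}$, extended by $v_i(T)=\max\{v_i(S'):S'\in\mathcal S_i,S'\subseteq T\}$ ($0$ if none). A declaration is any valuation $b_i:\mathcal S_i\to\mathbb R_{\ge0}$. A mechanism maps declarations to pairwise disjoint sets with $A_i(\mathbf b)\in\mathcal S_i\cup\{\emptyset\}$. Verification: bidder $i$ with true valuation $v_i$ facing $\mathbf b_{-i}$ may declare $b_i$ only if $b_i(A_i(b_i,\mathbf b_{-i}))\le v_i(A_i(b_i,\mathbf b_{-i}))$. Truthful without money and with verification: for all $i$, $\mathbf b_{-i}$, true $v_i$ and permitted $b_i$, $v_i(A_i(v_i,\mathbf b_{-i}))\ge v_i(A_i(b_i,\mathbf b_{-i}))$. Approximation ratio $\alpha$: on every truthful input, $\sum_i v_i(A_i)\ge\mathrm{OPT}/\alpha$, where $\mathrm{OPT}$ is the maximum welfare of a feasible allocation. *)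

(* Defs.v *)
From HB Require Import structures.
From mathcomp Require Import all_boot all_order all_algebra.
Set Implicit Arguments. Unset Strict Implicit. Unset Printing Implicit Defensive.
Import Order.TTheory GRing.Theory Num.Theory.
Local Open Scope ring_scope.

Section CA.
Variables (R : realFieldType) (n m k : nat).

(* Goods are 'I_m, bidders are 'I_n.  Bidder i's public collection S_i is
   given as B i : 'I_k -> {set 'I_m} (k distinct nonempty bundles).
   A valuation/declaration of bidder i is a function 'I_k -> R (its value on
   each bundle of S_i); a profile is 'I_n -> 'I_k -> R.
   An allocation gives each bidder either a bundle index (Some j, i.e. the
   set B i j in S_i) or nothing (None, i.e. the empty set). *)

Definition known_collections (B : 'I_n -> 'I_k -> {set 'I_m}) : Prop :=
  (forall i, injective (B i)) /\ (forall i j, B i j != set0).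

Definition nonneg_val (v : 'I_k -> R) : Prop := forall j, 0 <= v j.
Definition nonneg_profile (b : 'I_n -> 'I_k -> R) : Prop :=
  forall i, nonneg_val (b i).

Definition ext_val (Bi : 'I_k -> {set 'I_m}) (v : 'I_k -> R) (T : {set 'I_m}) : R :=
  \big[Num.max/0]_(j | Bi j \subset T) v j.

Definition alloc (B : 'I_n -> 'I_k -> {set 'I_m}) (a : 'I_n -> option 'I_k)
  (i : 'I_n) : {set 'I_m} :=
  if a i is Some j then B i j else set0.

Definition feasible (B : 'I_n -> 'I_k -> {set 'I_m}) (a : 'I_n -> option 'I_k) : bool :=
  [forall i, forall i', (i != i') ==> [disjoint alloc B a i & alloc B a i']].

Definition welfare (B : 'I_n -> 'I_k -> {set 'I_m}) (v : 'I_n -> 'I_k -> R)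
  (a : 'I_n -> option 'I_k) : R :=
  \sum_i ext_val (B i) (v i) (alloc B a i).

Definition OPT (B : 'I_n -> 'I_k -> {set 'I_m}) (v : 'I_n -> 'I_k -> R) : R :=
  \big[Num.max/0]_(a : {ffun 'I_n -> option 'I_k} | feasible B a) welfare B v a.

Definition upd (b : 'I_n -> 'I_k -> R) (i : 'I_n) (bi : 'I_k -> R) :
  'I_n -> 'I_k -> R := fun i' => if i' == i then bi else b i'.

Definition mechanism := ('I_n -> 'I_k -> R) -> ('I_n -> option 'I_k).

Definition valid_mechanism (B : 'I_n -> 'I_k -> {set 'I_m}) (A : mechanism) : Prop :=
  forall b, nonneg_profile b -> feasible B (A b).

(* verification: bidder i with true valuation vi facing b_{-i} may declare bi
   only if bi(A_i(bi, b_{-i})) <= vi(A_i(bi, b_{-i})) *)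
Definition permitted (B : 'I_n -> 'I_k -> {set 'I_m}) (A : mechanism)
  (i : 'I_n) (b : 'I_n -> 'I_k -> R) (vi bi : 'I_k -> R) : Prop :=
  let X := alloc B (A (upd b i bi)) i in
  ext_val (B i) bi X <= ext_val (B i) vi X.

Definition truthful_verif (B : 'I_n -> 'I_k -> {set 'I_m}) (A : mechanism) : Prop :=
  forall (i : 'I_n) (b : 'I_n -> 'I_k -> R) (vi bi : 'I_k -> R),
    nonneg_profile b -> nonneg_val vi -> nonneg_val bi ->
    permitted B A i b vi bi ->
    ext_val (B i) vi (alloc B (A (upd b i bi)) i)
      <= ext_val (B i) vi (alloc B (A (upd b i vi)) i).

Definition approx_ratio (B : 'I_n -> 'I_k -> {set 'I_m}) (A : mechanism)
  (alpha : R) : Prop :=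
  forall v, nonneg_profile v -> OPT B v / alpha <= welfare B v (A v).

End CA.

(* Main.v *)
Require Import Defs.
From HB Require Import structures.
From mathcomp Require Import all_boot all_order all_algebra.
From Stdlib Require Import FunctionalExtensionality.
Import Order.TTheory GRing.Theory Num.Theory.
Local Open Scope ring_scope.

Definition Bs : 'I_2 -> 'I_2 -> {set 'I_2} := fun _ j => [set j].

Definition ov {R : realFieldType} (v : 'I_2 -> R) (o : option 'I_2) : R :=
  if o is Some j then v j else 0.

Definition o1 : 'I_2 := Ordinal (isT : (1 < 2)%N).

Lemma bigmax_ub (R : realFieldType) (I : finType) (P : pred I) (F : I -> R) M :
  0 <= M -> (forall j, P j -> F j <= M) -> \big[Num.max/0]_(j | P j) F j <= M.
Proof.
move=> M0 h.
elim: (index_enum I) => [|x s IH]; first by rewrite big_nil.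
rewrite big_cons; case Px: (P x) => //.
by rewrite ge_max IH (h _ Px).
Qed.

Lemma bigmax_ge0 (R : realFieldType) (I : finType) (P : pred I) (F : I -> R) :
  0 <= \big[Num.max/0]_(j | P j) F j.
Proof.

elim: (index_enum I) => [|x s IH]; first by rewrite big_nil.
rewrite big_cons; case: (P x) => //.
by rewrite le_max IH orbT.
Qed.

Lemma le_bigmax_gen (R : realFieldType) (I : finType) (P : pred I) (F : I -> R) i :
  P i -> F i <= \big[Num.max/0]_(j | P j) F j.
Proof.
move=> Pi.
have : i \in index_enum I by rewrite mem_index_enum.
elim: (index_enum I) => // x s IH; rewrite big_cons inE.
case/predU1P => [<-|/IH h]; first by rewrite Pi le_max lexx.
by case: (P x) => //; rewrite le_max h orbT.
Qed.

Lemma ext_alloc (R : realFieldType) (v : 'I_2 -> R) (a : 'I_2 -> option 'I_2) i :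
  nonneg_val v -> ext_val (Bs i) v (alloc Bs a i) = ov v (a i).
Proof.
move=> hv; rewrite /alloc /ext_val /Bs /ov.
case: (a i) => [j|]; apply/le_anti/andP; split.
- apply: bigmax_ub => // j0; rewrite sub1set in_set1 => /eqP ->; exact: lexx.
- by apply: le_bigmax_gen; rewrite sub1set in_set1.
- by apply: bigmax_ub => // j0; rewrite sub1set in_set0.
- exact: bigmax_ge0.
Qed.

Lemma welfare2 (R : realFieldType) (v : 'I_2 -> 'I_2 -> R) (a : 'I_2 -> option 'I_2) :
  nonneg_profile v ->
  welfare Bs v a = ov (v ord0) (a ord0) + ov (v o1) (a o1).
Proof.
move=> hv; rewrite /welfare big_ord_recl big_ord1 !ext_alloc //.
by congr (_ + ov (v _) (a _)); apply: val_inj.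
Qed.


Lemma OPT_ge (R : realFieldType) (v : 'I_2 -> 'I_2 -> R) (a : {ffun 'I_2 -> option 'I_2}) :
  feasible Bs a -> welfare Bs v a <= OPT Bs v.
Proof. by move=> h; rewrite /OPT; apply: le_bigmax_gen. Qed.

Lemma ord2_cases (j : 'I_2) : j = ord0 \/ j = o1.
Proof. by case: j => [[|[|//]] H]; [left|right]; apply: val_inj. Qed.

Lemma feas_ne (a : 'I_2 -> option 'I_2) j :
  feasible Bs a -> a ord0 = Some j -> a o1 = Some j -> False.
Proof.
move/forallP/(_ ord0)/forallP/(_ o1) => + H0 H1; rewrite /alloc H0 H1.
rewrite /Bs disjoints1 in_set1 eqxx => /implyP h; by have := h isT.
Qed.

Lemma feas_of (a : 'I_2 -> option 'I_2) :
  (forall j, a ord0 = Some j -> a o1 = Some j -> False) -> feasible Bs a.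
Proof.
move=> h; apply/forallP => i; apply/forallP => i'; apply/implyP => ne.
rewrite /alloc /Bs.
case Ei: (a i) => [j|]; last by rewrite -setI_eq0 set0I.
case Ei': (a i') => [j'|]; last by rewrite -setI_eq0 setI0.
rewrite disjoints1 in_set1; apply/negP => /eqP E; subst j'.
case: (ord2_cases i) ne Ei => ->; case: (ord2_cases i') Ei' => -> E1 ne E0;
  try by rewrite eqxx in ne.
- exact: h E0 E1.
- exact: h E1 E0.
Qed.

Lemma feasA : feasible Bs [ffun i : 'I_2 => if i == ord0 then Some ord0 else None].
Proof. by apply: feas_of => j; rewrite !ffunE. Qed.
Lemma feasB : feasible Bs [ffun i : 'I_2 => if i == ord0 then Some o1 else Some ord0].
Proof. by apply: feas_of => j; rewrite !ffunE /= => -[<-]. Qed.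
Lemma feasC : feasible Bs [ffun i : 'I_2 => if i == ord0 then Some ord0 else Some o1].
Proof. by apply: feas_of => j; rewrite !ffunE /= => -[<-]. Qed.

From mathcomp Require Import lra.

Lemma ov_le (R : realFieldType) (v w : 'I_2 -> R) o :
  (forall j, v j <= w j) -> ov v o <= ov w o.
Proof. by case: o => [j|] h //=; exact: h. Qed.

Theorem theorem11 :
  forall R : realFieldType,
  exists B : 'I_2 -> 'I_2 -> {set 'I_2},
    known_collections B /\
    forall A : mechanism R 2 2,
      valid_mechanism B A -> truthful_verif B A ->
      forall alpha : R, 0 < alpha -> alpha < 2 -> ~ approx_ratio B A alpha.
Proof.
move=> R; exists Bs; split.
  split=> i; first exact: set1_inj.
  by move=> j; apply/set0Pn; exists j; rewrite /Bs in_set1.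
move=> A valid truth alpha a0 a2 appr.
pose c := alpha / 2.
have c0 : 0 <= c by rewrite /c; lra.
have c1 : c < 1 by rewrite /c; lra.
pose v1 : 'I_2 -> R := fun j => if j == ord0 then 1 else c.
pose v0 : 'I_2 -> R := fun j => if j == ord0 then 1 else 0.
have nv1 : nonneg_val v1 by move=> j; rewrite /v1; case: ifP.
have nv0 : nonneg_val v0 by move=> j; rewrite /v0; case: ifP.
have v01 : forall j, v0 j <= v1 j by move=> j; rewrite /v0 /v1; case: ifP.
pose P : 'I_2 -> 'I_2 -> R := fun i => if i == ord0 then v1 else v0.
pose P' : 'I_2 -> 'I_2 -> R := fun i => if i == ord0 then v0 else v1.
pose Q : 'I_2 -> 'I_2 -> R := fun _ => v0.
have nP : nonneg_profile P by move=> i; rewrite /P; case: ifP.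
have nP' : nonneg_profile P' by move=> i; rewrite /P'; case: ifP.
have nQ : nonneg_profile Q by move=> i.
have eQ1 : upd P ord0 v0 = Q.
  apply: functional_extensionality => i; by rewrite /upd /P /Q; case: (i == ord0).
have eP1 : upd P ord0 v1 = P.
  by apply: functional_extensionality => i; rewrite /upd /P; case: (i == ord0).
have eQ2 : upd P' o1 v0 = Q.
  apply: functional_extensionality => i; rewrite /upd /P' /Q.
  by case: (ord2_cases i) => ->.
have eP2 : upd P' o1 v1 = P'.
  apply: functional_extensionality => i; rewrite /upd /P'.
  by case: (ord2_cases i) => ->.
have t0 := truth ord0 P v1 v0 nP nv1 nv0.
rewrite /permitted eQ1 eP1 !ext_alloc // in t0.
have {}t0 := t0 (ov_le _ _ _ _ v01).
have t1 := truth o1 P' v1 v0 nP' nv1 nv0.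
rewrite /permitted eQ2 eP2 !ext_alloc // in t1.
have {}t1 := t1 (ov_le _ _ _ _ v01).
have ainv : forall x y : R, x / alpha <= y -> x <= y * alpha.
  by move=> x y; rewrite ler_pdivrMr.
have hc : c = alpha / 2 by [].
have ev0 : forall o, ov v0 o = if o == Some ord0 then 1 else 0.
  by case=> [j|] //=; case: (ord2_cases j) => ->.
have ev1 : forall o, ov v1 o = if o == Some ord0 then 1 else if o == None then 0 else c.
  by case=> [j|] //=; case: (ord2_cases j) => ->.
have v1o1 : v1 o1 = c by [].
have v0o0 : v0 ord0 = 1 by [].
have v1o0 : v1 ord0 = 1 by [].
have v0o1 : v0 o1 = 0 by [].
have endP : A P ord0 = Some ord0 -> False.
  move=> E.
  have hP := ainv _ _ (appr P nP).
  have oP := OPT_ge _ P _ feasB.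
  rewrite welfare2 // !ffunE /= in oP.
  rewrite welfare2 // E in hP.
  have p0 : P ord0 = v1 by []. have p1 : P o1 = v0 by [].
  rewrite p0 p1 !ev0 !ev1 /= in oP hP.
  rewrite ?v1o1 ?v0o0 ?v1o0 ?v0o1 hc in oP.
  have hv := valid P nP.
  case E1: (A P o1) hP => [j|] hP; last by move: hP oP; rewrite /= addr0; lra.
  case: (ord2_cases j) E1 hP => -> E1 hP; first by case: (feas_ne _ _ hv E E1).
  by move: hP oP; rewrite /= addr0 mul1r; lra.
have endP' : A P' o1 = Some ord0 -> False.
  move=> E.
  have hP := ainv _ _ (appr P' nP').
  have oP := OPT_ge _ P' _ feasC.
  rewrite welfare2 // !ffunE /= in oP.
  rewrite welfare2 // E in hP.
  have p0 : P' ord0 = v0 by []. have p1 : P' o1 = v1 by [].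
  rewrite p0 p1 !ev0 !ev1 /= in oP hP.
  rewrite ?v1o1 ?v0o0 ?v1o0 ?v0o1 hc in oP.
  have hv := valid P' nP'.
  case E1: (A P' ord0) hP => [j|] hP; last by move: hP oP; rewrite /= add0r; lra.
  case: (ord2_cases j) E1 hP => -> E1 hP; first by case: (feas_ne _ _ hv E1 E).
  by move: hP oP; rewrite /= add0r mul1r; lra.
have hQ := ainv _ _ (appr Q nQ).
have oQ := OPT_ge _ Q _ feasA.
rewrite welfare2 // !ffunE /= in oQ.
have qE : forall i, Q i = v0 by [].
rewrite welfare2 // !qE !ev0 in hQ.
rewrite !qE ?v0o0 /= in oQ.
rewrite !ev1 in t0 t1.
have fin1 : A Q o1 = Some ord0 -> False.
  move=> E3; rewrite E3 /= in t1.
  case E2: (A P' o1) t1 => [j'|] t1; last by move: t1; rewrite /=; lra.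
  case: (ord2_cases j') E2 t1 => -> E2 t1; first exact: endP' E2.
  by move: t1; rewrite /=; lra.
case E0: (A Q ord0) hQ t0 => [j|] hQ t0.
  case: (ord2_cases j) E0 hQ t0 => -> E0 hQ t0 /=.
    case E2: (A P ord0) t0 => [j'|] t0; last by move: t0; rewrite /=; lra.
    case: (ord2_cases j') E2 t0 => -> E2 t0; first exact: endP E2.
    by move: t0; rewrite /=; lra.
  case E3: (A Q o1 == Some ord0) hQ => hQ; first by move/eqP: E3.
  by move: hQ oQ; rewrite /= add0r mul0r; lra.
case E3: (A Q o1 == Some ord0) hQ => hQ; first by move/eqP: E3.
by move: hQ oQ; rewrite /= add0r mul0r; lra.
Qed.
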